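(* Let $\phi$ be a circuit all of whose constraints are windable. Then the signature $[\![\phi]\!]$ is windable.
   Context: For $x,y\in\{0,1\}^J$, $x\oplus y$ is coordinatewise addition mod 2, and $\mathbf S$ is the characteristic vector of $S\subseteq J$. For $z\in\{0,1\}^J$, $\mathrm{Match}'(z)$ is the set of partitions of $\{i:z_i=1\}$ into blocks of size 1 or 2. $F:\{0,1\}^J\to\mathbb{Q}_{\ge0}$ is windable if there exist $B(x,y,M)\ge0$ for all $x,y\in\{0,1\}^J$ and $M\in\mathrm{Match}'(x\oplus y)$ with (1) $F(x)F(y)=\sum_{M\in\mathrm{Match}'(x\oplus y)}B(x,y,M)$ for all $x,y$, and (2) $B(x,y,M)=B(x\oplus\mathbf S,y\oplus\mathbf S,M)$ for all $x,y$ and all $S\in M\in\mathrm{Match}'(x\oplus y)$. A circuit $\phi$ consists of: a finite set $J$ of incidences; a finite set $V$ of vertices with sets $J_v$ partitioning $J$; a set $A\subseteq J$ of external edges; a partition $E$ of $J\setminus A$ into pairs (internal edges); and constraints $F_v:\{0,1\}^{J_v}\to\mathbb{Q}_{\ge0}$. An assignment is $x\in\{0,1\}^J$ with $x_i=x_j$ for all $\{i,j\}\in E$; $\mathrm{wt}_\phi(x)=\prod_vF_v(x|_{J_v})$; the signature is $[\![\phi]\!]:\{0,1\}^A\to\mathbb{Q}_{\ge0}$, $[\![\phi]\!](x)=\sum\mathrm{wt}_\phi(x')$ over assignments $x'$ extending $x$. *)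

(* Defs.v *)
From HB Require Import structures.
From mathcomp Require Import all_boot all_order all_algebra.
Set Implicit Arguments. Unset Strict Implicit. Unset Printing Implicit Defensive.
Import Order.TTheory GRing.Theory Num.Theory.
Local Open Scope ring_scope.

(* Elements of {0,1}^K are represented by subsets of K (their supports);
   the characteristic vector of S is S itself. *)

(* x (+) y : coordinatewise addition mod 2 = symmetric difference *)
Definition symd (K : finType) (x y : {set K}) : {set K} := (x :\: y) :|: (y :\: x).

Definition isMatch (K : finType) (z : {set K}) (M : {set {set K}}) : bool :=
  partition M z && [forall S in M, (#|S| == 1)%N || (#|S| == 2)%N].

Definition windable (K : finType) (F : {set K} -> rat) : Prop :=
  (forall x, 0 <= F x) /\
  exists B : {set K} -> {set K} -> {set {set K}} -> rat,
    (forall x y M, 0 <= B x y M) /\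
    (forall x y, F x * F y = \sum_(M : {set {set K}} | isMatch (symd x y) M) B x y M) /\
    (forall x y M S, isMatch (symd x y) M -> S \in M ->
        B x y M = B (symd x S) (symd y S) M).

(* Circuits: incidences J, vertices V, owner j = the vertex v with j \in J_v,
   external edges A, internal edges E (a partition of J \ A into pairs),
   constraints F v : {0,1}^{J_v} -> Q. *)
Definition ext_t (J : finType) (A : {set J}) : finType := {j : J | j \in A}.
Definition inc_t (J V : finType) (owner : J -> V) (v : V) : finType :=
  {j : J | owner j == v}.

Definition restr (J V : finType) (owner : J -> V) (x : {set J}) (v : V)
  : {set inc_t owner v} := [set j : inc_t owner v | val j \in x].

Definition is_assignment (J : finType) (E : {set {set J}}) (x : {set J}) : bool :=
  [forall e in E, forall i in e, forall j in e, (i \in x) == (j \in x)].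

Definition wt (J V : finType) (owner : J -> V)
  (F : forall v : V, {set inc_t owner v} -> rat) (x : {set J}) : rat :=
  \prod_(v : V) F v (restr owner x v).

Definition extends (J : finType) (A : {set J}) (a : {set ext_t A}) (x : {set J}) : bool :=
  [forall j : ext_t A, (val j \in x) == (j \in a)].

Definition signature (J V : finType) (owner : J -> V) (A : {set J}) (E : {set {set J}})
  (F : forall v : V, {set inc_t owner v} -> rat) (a : {set ext_t A}) : rat :=
  \sum_(x : {set J} | is_assignment E x && extends a x) wt F x.

(* Main.v *)
Require Import Defs.
From HB Require Import structures.
From mathcomp Require Import all_boot all_order all_algebra.
From mathcomp Require Import zify ring.
Set Implicit Arguments. Unset Strict Implicit. Unset Printing Implicit Defensive.
Import Order.TTheory GRing.Theory Num.Theory.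
Local Open Scope ring_scope.

Ltac brute := rewrite ?inE; do ! case: (_ \in _).

Section Gen.
Variable J : finType.
Implicit Types (x y D U P S T : {set J}) (M : {set {set J}}).

Lemma in_symd x y (z : J) : (z \in symd x y) = (z \in x) (+) (z \in y).
Proof. by rewrite /symd !inE; case: (z \in x); case: (z \in y). Qed.

Definition matchP D M :=
  [/\ forall S, S \in M -> S \subset D /\ ((#|S| == 1)%N || (#|S| == 2)%N),
      forall z, z \in D -> exists2 S, S \in M & z \in S
    & forall S T z, S \in M -> T \in M -> z \in S -> z \in T -> S = T].

Lemma isMatchP D M : isMatch D M <-> matchP D M.
Proof.
split.
- move=> /andP[Hp /forallP Hc]; split.
  + move=> S HS; split; first exact: (partitionS Hp HS).
    by move: (Hc S); rewrite HS.
  + move=> z; rewrite -(cover_partition Hp) => /bigcupP[S HS zS]; by exists S.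
  + move=> S T z HS HT zS zT; apply/eqP; apply/negPn/negP => neq.
    have := (trivIsetP (partition_trivIset Hp)) S T HS HT neq.
    by move=> /disjointFr => /(_ z zS); rewrite zT.
- move=> [H1 H2 H3]; apply/andP; split.
  + rewrite /partition; apply/and3P; split.
    * apply/eqP/setP => z; apply/bigcupP/idP.
      - move=> [S HS zS]; have [/subsetP H _] := H1 S HS; exact: H.
      - move=> zD; have [S HS zS] := H2 z zD; by exists S.
    * apply/trivIsetP => S T HS HT neq; rewrite -setI_eq0; apply/eqP/setP => z.
      rewrite !inE; apply/negbTE/negP => /andP[zS zT].
      by move/eqP: neq; apply; exact: H3 zS zT.
    * apply/negP => H0; have [_] := H1 _ H0; by rewrite cards0.
  + apply/forallP => S; apply/implyP => HS; by have [_ ->] := H1 S HS.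
Qed.


Definition winds U (G : {set J} -> rat) :=
  (forall x, 0 <= G x) /\
  exists B : {set J} -> {set J} -> {set {set J}} -> rat,
    (forall x y M, 0 <= B x y M) /\
    (forall x y, x \subset U -> y \subset U ->
        G x * G y = \sum_(M | isMatch (symd x y) M) B x y M) /\
    (forall x y M S, x \subset U -> y \subset U -> isMatch (symd x y) M -> S \in M ->
        B x y M = B (symd x S) (symd y S) M).

Lemma winds_ext U G G' : winds U G -> (forall x, 0 <= G' x) ->
  (forall x, x \subset U -> G x = G' x) -> winds U G'.
Proof.
move=> [_ [B [HB [H1 H2]]]] H0 HG; split => //; exists B; split => //; split => //.
by move=> x y Hx Hy; rewrite -!HG //; apply: H1.
Qed.

Lemma symd_sub x y U : x \subset U -> y \subset U -> symd x y \subset U.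
Proof.
move=> /subsetP Hx /subsetP Hy; apply/subsetP => z; rewrite in_symd.
by case Ez: (z \in x) => /=; [move=> _; apply: Hx | move=> zy; apply: Hy].
Qed.

Lemma match_sub D M S : isMatch D M -> S \in M -> S \subset D.
Proof. by move=> /isMatchP[H _ _] /H[]. Qed.

Lemma match_neq0 D M S : isMatch D M -> S \in M -> exists z, z \in S.
Proof.
move=> /isMatchP[H _ _] /H[_ Hc]; case: (set_0Vmem S) => [E|[z zS]]; last by exists z.
by move: Hc; rewrite E cards0.
Qed.

Lemma winds0 : winds set0 (fun _ => 1).
Proof.
split => //; exists (fun x y M => (M == set0)%:R); split; first by move=> *; rewrite ler0n.
split.
- move=> x y; rewrite !subset0 => /eqP-> /eqP->.
  have -> : symd set0 set0 = (set0 : {set J}) by apply/setP => z; rewrite in_symd !inE.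
  rewrite (eq_bigl (fun M => M == set0)) ?big_pred1_eq ?eqxx ?mulr1 //.
  by move=> M; rewrite /isMatch partition_set0; case: eqP => // ->; apply/forallP => S; rewrite inE.
- move=> x y M S; rewrite !subset0 => /eqP-> /eqP-> HM HS.
  have [z zS] := match_neq0 HM HS; have := subsetP (match_sub HM HS) z zS.
  by rewrite in_symd !inE.
Qed.


Lemma symdI x y U : symd x y :&: U = symd (x :&: U) (y :&: U).
Proof. by apply/setP=> z; rewrite !inE; brute. Qed.

Lemma symdI_sub x S U : S \subset U -> symd x S :&: U = symd (x :&: U) S.
Proof.
move=> /subsetP HS; apply/setP=> z; rewrite !inE.
case zS: (z \in S); first by rewrite (HS z zS); brute.
by brute.
Qed.

Lemma symdI_dis x S U : (forall z, z \in S -> z \in U -> False) -> symd x S :&: U = x :&: U.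
Proof.
move=> HS; apply/setP=> z; rewrite !inE.
case zU: (z \in U); last by brute.
case zS: (z \in S); last by brute.
by exfalso; apply: (HS z).
Qed.

Lemma subM_union (Ma Mb : {set {set J}}) Ua Ub Da Db :
  isMatch (Da :&: Ua) Ma -> isMatch (Db :&: Ub) Mb -> [disjoint Ua & Ub] ->
  [set S in Ma :|: Mb | S \subset Ua] = Ma.
Proof.
move=> Ha Hb dab; apply/setP => S; rewrite !inE; case HSa: (S \in Ma) => /=.
  by rewrite (subset_trans (match_sub Ha HSa)) ?subsetIr.
case HSb: (S \in Mb) => //=; apply/negP => /subsetP HSU.
have [z zS] := match_neq0 Hb HSb.
have := subsetP (match_sub Hb HSb) z zS; rewrite inE => /andP[_ zUb].
by move: (disjointFr dab (HSU z zS)); rewrite zUb.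
Qed.

Section Prod.
Variables (U1 U2 : {set J}) (G1 G2 : {set J} -> rat).
Hypothesis dis : [disjoint U1 & U2].

Lemma dis12 z : z \in U1 -> z \in U2 -> False.
Proof. by move=> z1 z2; move: (disjointFr dis z1); rewrite z2. Qed.

Definition subM M U := [set S in M | S \subset U].
Definition splitb M := [forall S in M, (S \subset U1) || (S \subset U2)].

Lemma split_match D M : D \subset U1 :|: U2 ->
  (isMatch (D :&: U1) (subM M U1) && isMatch (D :&: U2) (subM M U2)
     && (subM M U1 :|: subM M U2 == M))
  = (isMatch D M && splitb M).
Proof.
move=> /subsetP HD; apply/idP/idP.
- move=> /andP[/andP[/isMatchP[A1 B1 C1] /isMatchP[A2 B2 C2]] /eqP EM].
  apply/andP; split.
  + apply/isMatchP; split.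
    * move=> S; rewrite -EM !inE => /orP[] /andP[HS HS'].
      - have HS1 : S \in subM M U1 by rewrite inE HS HS'.
        have [Hs ->] := A1 S HS1.
        by split=> //; apply: subset_trans Hs _; apply: subsetIl.
      - have HS1 : S \in subM M U2 by rewrite inE HS HS'.
        have [Hs ->] := A2 S HS1.
        by split=> //; apply: subset_trans Hs _; apply: subsetIl.
    * move=> z zD; have := HD z zD; rewrite inE => /orP[] zU.
      - have zD1 : z \in D :&: U1 by rewrite inE zD zU.
        have [S HS zS] := B1 z zD1.
        by exists S => //; rewrite -EM inE HS.
      - have zD1 : z \in D :&: U2 by rewrite inE zD zU.
        have [S HS zS] := B2 z zD1.
        by exists S => //; rewrite -EM inE HS orbT.
    * move=> S T z; rewrite -EM !inE => HS HT zS zT.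
      case/orP: HS => HS; case/orP: HT => HT.
      - by apply: (C1 _ _ z) => //; rewrite inE.
      - exfalso; move: HS HT => /andP[_ /subsetP s1] /andP[_ /subsetP s2].
        exact: (dis12 (s1 z zS) (s2 z zT)).
      - exfalso; move: HS HT => /andP[_ /subsetP s1] /andP[_ /subsetP s2].
        exact: (dis12 (s2 z zT) (s1 z zS)).
      - by apply: (C2 _ _ z) => //; rewrite inE.
  + apply/forallP => S; apply/implyP; rewrite -EM !inE.
    by case/orP => /andP[_ ->] //; rewrite orbT.
- move=> /andP[/isMatchP[A B C] /forallP Hs].
  have sub_ok : forall U, (forall z, z \in D -> z \in U -> forall S, S \in M -> z \in S -> S \subset U) ->
      isMatch (D :&: U) (subM M U).
    move=> U HU; apply/isMatchP; split.
    * move=> S; rewrite inE => /andP[HS HSU]; have [HSD ->] := A S HS; split=> //.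
      by rewrite subsetI HSD HSU.
    * move=> z; rewrite inE => /andP[zD zU]; have [S HS zS] := B z zD.
      by exists S => //; rewrite inE HS (HU z zD zU S HS zS).
    * move=> S T z; rewrite !inE => /andP[HS _] /andP[HT _]; exact: C.
  apply/andP; split; first (apply/andP; split).
  + apply: sub_ok; move=> z zD zU S HS zS; move: (Hs S); rewrite HS /= => /orP[] // /subsetP H.
    by exfalso; apply: (dis12 zU (H z zS)).
  + apply: sub_ok; move=> z zD zU S HS zS; move: (Hs S); rewrite HS /= => /orP[] // /subsetP H.
    by exfalso; apply: (dis12 (H z zS) zU).
  + apply/eqP/setP => S; rewrite !inE; case HS: (S \in M) => //=.
    by move: (Hs S); rewrite HS.
Qed.

Lemma winds_mul : winds U1 G1 -> winds U2 G2 ->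
  winds (U1 :|: U2) (fun x => G1 (x :&: U1) * G2 (x :&: U2)).
Proof.
move=> [P1 [B1 [N1 [S1 I1]]]] [P2 [B2 [N2 [S2 I2]]]].
split; first by move=> x; rewrite mulr_ge0.
exists (fun x y M => if splitb M then B1 (x :&: U1) (y :&: U1) (subM M U1)
                        * B2 (x :&: U2) (y :&: U2) (subM M U2) else 0).
split; first by move=> x y M; case: ifP => // _; rewrite mulr_ge0.
split.
- move=> x y Hx Hy.
  rewrite mulrACA (S1 _ _ (subsetIr _ _) (subsetIr _ _)) (S2 _ _ (subsetIr _ _) (subsetIr _ _)).
  rewrite -!symdI big_distrlr /= pair_big /=.
  rewrite (reindex_onto (fun M => (subM M U1, subM M U2)) (fun p => p.1 :|: p.2)) /=.
  + rewrite big_mkcond [RHS]big_mkcond; apply: eq_bigr => M _.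
    rewrite (split_match M (symd_sub Hx Hy)).
    by case: (isMatch _ M); case: (splitb M).
  + move=> [M1 M2] /= /andP[H1 H2]; congr pair.
    * exact: (subM_union H1 H2 dis).
    * rewrite setUC; apply: (subM_union H2 H1); by rewrite disjoint_sym.
- move=> x y M S Hx Hy HM HS.
  case Hsp: (splitb M) => //.
  have := split_match M (symd_sub Hx Hy); rewrite HM Hsp => /andP[/andP[Hm1 Hm2] _].
  move: (Hsp) => /forallP/(_ S); rewrite HS /= => /orP[HS1|HS2].
  + have Hd : forall z, z \in S -> z \in U2 -> False.
      by move=> z zS; apply: dis12; apply: (subsetP HS1).
    rewrite (symdI_dis x Hd) (symdI_dis y Hd) (symdI_sub x HS1) (symdI_sub y HS1); congr (_ * _).
    apply: I1; rewrite ?subsetIr -?symdI //.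
    by rewrite inE HS HS1.
  + have Hd : forall z, z \in S -> z \in U1 -> False.
      by move=> z zS zU; apply: (dis12 zU); apply: (subsetP HS2).
    rewrite (symdI_dis x Hd) (symdI_dis y Hd) (symdI_sub x HS2) (symdI_sub y HS2); congr (_ * _).
    apply: I2; rewrite ?subsetIr -?symdI //.
    by rewrite inE HS HS2.
Qed.

End Prod.


Lemma pb_facts Dh M w : isMatch Dh M ->
  (w \in Dh -> pblock M w \in M /\ w \in pblock M w) /\ (w \notin Dh -> pblock M w = set0).
Proof.
move=> HM; have Hp : partition M Dh by case/andP: HM.
have Hc := cover_partition Hp; split.
- by move=> wD; rewrite pblock_mem ?mem_pblock Hc.
- move=> wD; rewrite /pblock; case: pickP => //= B /andP[BM wB].
  by move: wD; rewrite -Hc; move/bigcupP => []; exists B.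
Qed.

Lemma not_disj_ex S T : ~~ [disjoint S & T] -> exists2 z, z \in S & z \in T.
Proof.
rewrite -setI_eq0; case: (set_0Vmem (S :&: T)) => [->|[z]]; first by rewrite eqxx.
by rewrite inE => /andP[zS zT] _; exists z.
Qed.

Section Contract.
Variables (U : {set J}) (i j : J).
Hypotheses (iU : i \in U) (jU : j \in U) (ij : i != j).

Definition PP : {set J} := locked [set i; j].
Definition ext x (b : bool) := if b then x :|: PP else x.
Definition Wc M := (pblock M i :|: pblock M j) :\: PP.
Definition Kc M := [set S in M | [disjoint S & PP]].
Definition contract M := (Kc M :|: [set Wc M]) :\ set0.

Lemma in_contract M S : (S \in contract M) = (S != set0) && ((S \in Kc M) || (S == Wc M)).
Proof. by rewrite !inE. Qed.

Lemma inPP z : (z \in PP) = (z == i) || (z == j).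
Proof. by rewrite /PP -lock !inE. Qed.

Lemma card_pb Dh M w : isMatch Dh M -> (#|pblock M w :\ w| <= 1)%N.
Proof.
move=> HM; have [F1 F2] := pb_facts w HM.
case: (boolP (w \in Dh)) => wD.
- have [pM wp] := F1 wD; have /isMatchP[A _ _] := HM; have [_ Hc] := A _ pM.
  move: (cardsD1 w (pblock M w)); rewrite wp; move: Hc.
  case/orP => /eqP ->; lia.
- by rewrite (F2 wD) set0D cards0.
Qed.

Lemma card_Wc Dh M : isMatch Dh M -> (#|Wc M| <= 2)%N.
Proof.
move=> HM; apply: (@leq_trans #|(pblock M i :\ i) :|: (pblock M j :\ j)|).
- apply: subset_leq_card; apply/subsetP => z; rewrite !inE inPP.
  case/andP => /norP[zi zj] /orP[] ->; by rewrite ?zi ?zj ?orbT.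
- have := cardsUI (pblock M i :\ i) (pblock M j :\ j).
  have := card_pb i HM; have := card_pb j HM; lia.
Qed.

Lemma contract_match (D Dh : {set J}) M : D \subset Dh -> Dh \subset D :|: PP ->
  (forall z, z \in D -> z \notin PP) -> isMatch Dh M -> isMatch D (contract M).
Proof.
move=> /subsetP DDh /subsetP DhD DP HM.
have /isMatchP[A B C] := HM.
have pbsub : forall w z, z \in pblock M w -> z \in Dh.
  move=> w z; have [F1 F2] := pb_facts w HM; case: (boolP (w \in Dh)) => wD.
  - by have [pM _] := F1 wD; move: z; apply/subsetP; have [] := A _ pM.
  - by rewrite (F2 wD) inE.
have Kcsub : forall S, S \in Kc M -> S \subset D.
  move=> S; rewrite inE => /andP[SM Sd]; apply/subsetP => z zS.
  have := DhD z (subsetP (proj1 (A S SM)) z zS); rewrite inE => /orP[] // zP.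
  by move: (disjointFr Sd zS); rewrite zP.
have Wsub : Wc M \subset D.
  apply/subsetP => z; rewrite inE => /andP[zP zpb].
  have zDh : z \in Dh by case/setUP: zpb => /pbsub.
  by move: (DhD z zDh); rewrite inE (negbTE zP) orbF.
have Wblk : forall S z, S \in M -> z \in S -> z \in Wc M -> ~~ [disjoint S & PP].
  move=> S z SM zS; rewrite inE => /andP[zP] /setUP[] zpb.
  - have [F1 F2] := pb_facts i HM; case: (boolP (i \in Dh)) => iD; last by move: zpb; rewrite (F2 iD) inE.
    have [pM ip] := F1 iD; rewrite (C _ _ _ SM pM zS zpb).
    by apply/negP => /disjointFr /(_ ip); rewrite inPP eqxx.
  - have [F1 F2] := pb_facts j HM; case: (boolP (j \in Dh)) => jD; last by move: zpb; rewrite (F2 jD) inE.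
    have [pM jp] := F1 jD; rewrite (C _ _ _ SM pM zS zpb).
    by apply/negP => /disjointFr /(_ jp); rewrite inPP eqxx orbT.
apply/isMatchP; split.
- move=> S; rewrite in_contract => /andP[S0 /orP[SK|/eqP ES]]; last subst S.
  + split; first exact: Kcsub.
    by move: SK; rewrite inE => /andP[SM _]; have [] := A S SM.
  + split; first exact: Wsub.
    by move: S0 (card_Wc HM); rewrite -card_gt0; case: #|Wc M| => [|[|[|]]].
- move=> z zD; have [S SM zS] := B z (DDh z zD).
  case Sd: [disjoint S & PP].
  + exists S => //; rewrite in_contract inE SM Sd /= andbT.
    by apply/set0Pn; exists z.
  + have zW : z \in Wc M.
      have [w wS wP] := not_disj_ex (negbT Sd).
      rewrite /Wc inE (DP z zD) /=; move: wP; rewrite inPP => /orP[] /eqP Ew; subst w.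
      * by rewrite (def_pblock (partition_trivIset (proj1 (andP HM))) SM wS) inE zS.
      * by rewrite (def_pblock (partition_trivIset (proj1 (andP HM))) SM wS) inE zS orbT.
    exists (Wc M) => //; rewrite in_contract eqxx orbT andbT.
    by apply/set0Pn; exists z.
- move=> S T z; rewrite !in_contract => /andP[_ HS] /andP[_ HT] zS zT.
  case/orP: HS => [SK|/eqP ES]; case/orP: HT => [TK|/eqP ET].
  + by move: SK TK; rewrite !inE => /andP[SM _] /andP[TM _]; apply: C zS zT.
  + move: SK; rewrite inE => /andP[SM Sd]; subst T.
    by move: (Wblk S z SM zS zT); rewrite Sd.
  + move: TK; rewrite inE => /andP[TM Td]; subst S.
    by move: (Wblk T z TM zT zS); rewrite Td.
  + by rewrite ES ET.
Qed.

Definition noPP x := forall z, z \in PP -> z \notin x.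

Lemma sub_noPP x : x \subset U :\: PP -> noPP x.
Proof. by move=> /subsetP H z zP; apply/negP => /H; rewrite inE zP. Qed.

Lemma PP_U : PP \subset U.
Proof. by apply/subsetP => z; rewrite inPP => /orP[] /eqP->. Qed.

Lemma ext_sub x b : x \subset U :\: PP -> ext x b \subset U.
Proof.
move=> Hx; have HxU : x \subset U by apply: subset_trans Hx (subsetDl _ _).
by case: b; rewrite /ext // subUset HxU PP_U.
Qed.

Lemma symd_ext x y b1 b2 : noPP x -> noPP y ->
  symd (ext x b1) (ext y b2) = symd x y :|: (if b1 (+) b2 then PP else set0).
Proof.
move=> hx hy; apply/setP => z; case zP: (z \in PP).
- move: (hx z zP) (hy z zP) => /negbTE zx /negbTE zy.
  by case: b1; case: b2; rewrite /ext !inE ?zP ?zx ?zy.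
- by case: b1; case: b2; rewrite /ext !inE ?zP /=; brute.
Qed.

Lemma ext_symd x S b : noPP S -> ext (symd x S) b = symd (ext x b) S.
Proof.
move=> hS; apply/setP => z; case zP: (z \in PP).
- move: (hS z zP) => /negbTE zS.
  by case: b; rewrite /ext !inE ?zP ?zS /=; brute.
- by case: b; rewrite /ext !inE ?zP /=; brute.
Qed.

Lemma symd_flip a b S : symd (symd a S) (symd b S) = symd a b.
Proof. by apply/setP => z; rewrite !inE; brute. Qed.

Lemma noPP_symd x y : noPP x -> noPP y -> noPP (symd x y).
Proof. by move=> hx hy z zP; rewrite !inE (negbTE (hx z zP)) (negbTE (hy z zP)). Qed.

Lemma ext_flipW x W b : noPP x -> noPP W ->
  symd (symd (ext x b) PP) W = ext (symd x W) (~~ b).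
Proof.
move=> hx hW; apply/setP => z; case zP: (z \in PP).
- move: (hx z zP) (hW z zP) => /negbTE zx /negbTE zW.
  by case: b; rewrite /ext !inE ?zP ?zx ?zW.
- by case: b; rewrite /ext !inE ?zP /=; brute.
Qed.

Lemma winds_contract (G : {set J} -> rat) : winds U G ->
  winds (U :\: PP) (fun x => G x + G (x :|: PP)).
Proof.
move=> [G0 [B [B0 [BS BI]]]].
pose T x y Mh := \sum_(b1 : bool) \sum_(b2 : bool)
   (if isMatch (symd (ext x b1) (ext y b2)) Mh then B (ext x b1) (ext y b2) Mh else 0).
split; first by move=> x; rewrite addr_ge0.
exists (fun x y M => \sum_(Mh | contract Mh == M) T x y Mh).
split.
  move=> x y M; apply: sumr_ge0 => Mh _; apply: sumr_ge0 => b1 _; apply: sumr_ge0 => b2 _.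
  by case: ifP.
split.
- move=> x y Hx Hy; have hx := sub_noPP Hx; have hy := sub_noPP Hy.
  have cm : forall b1 b2 Mh, isMatch (symd (ext x b1) (ext y b2)) Mh ->
      isMatch (symd x y) (contract Mh).
    move=> b1 b2 Mh; rewrite symd_ext //; apply: contract_match.
    + exact: subsetUl.
    + by rewrite subUset subsetUl; case: (b1 (+) b2); rewrite ?sub0set ?subsetUr.
    + move=> z zD; apply/negP => zP; move: (noPP_symd hx hy zP); by rewrite zD.
  have E3 : \sum_(M | isMatch (symd x y) M) \sum_(Mh | contract Mh == M) T x y Mh
            = \sum_Mh T x y Mh.
    rewrite [RHS](bigID (fun Mh => isMatch (symd x y) (contract Mh))) /=.
    rewrite [X in _ = _ + X]big1 ?addr0; last first.
      move=> Mh /negbTE Hn; apply: big1 => b1 _; apply: big1 => b2 _.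
      by case: ifP => // /cm; rewrite Hn.
    rewrite [RHS](partition_big contract (isMatch (symd x y))) //=.
    apply: eq_bigr => M HM; apply: eq_bigl => Mh.
    by case: eqP => [->|]; rewrite ?HM ?andbF ?andbT.
  rewrite E3 /T.
  rewrite exchange_big /=; under eq_bigr => b1 _ do rewrite exchange_big /=.
  have E2 : forall b1 b2, G (ext x b1) * G (ext y b2) =
      \sum_Mh (if isMatch (symd (ext x b1) (ext y b2)) Mh then B (ext x b1) (ext y b2) Mh else 0).
    by move=> b1 b2; rewrite -big_mkcond; apply: BS; apply: ext_sub.
  under eq_bigr => b1 _ do under eq_bigr => b2 _ do rewrite -E2.
  rewrite !big_bool /ext /=; ring.
- move=> x y M S Hx Hy HM HS; have hx := sub_noPP Hx; have hy := sub_noPP Hy.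
  have hS : noPP S.
    move=> z zP; apply/negP => zS; move: (noPP_symd hx hy zP).
    by rewrite (subsetP (match_sub HM HS) z zS).
  have E : forall b1 b2, symd (ext (symd x S) b1) (ext (symd y S) b2) = symd (ext x b1) (ext y b2).
    by move=> b1 b2; rewrite !ext_symd // symd_flip.
  apply: eq_bigr => Mh /eqP EM.
  have : S \in contract Mh by rewrite EM.
  rewrite in_contract => /andP[S0 /orP[SK|/eqP ESW]].
  + apply: eq_bigr => b1 _; apply: eq_bigr => b2 _.
    rewrite E; case: ifP => // Hc; rewrite !ext_symd //.
    apply: BI => //; try apply: ext_sub => //.
    by move: SK; rewrite inE => /andP[].
  + have Z : forall b, isMatch (symd (ext x b) (ext y b)) Mh = false.
      move=> b; rewrite symd_ext // addbb setU0; apply/negP => Hm.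
      have Pi : i \in PP by rewrite inPP eqxx.
      have Pj : j \in PP by rewrite inPP eqxx orbT.
      have [_ F2i] := pb_facts i Hm; have [_ F2j] := pb_facts j Hm.
      move: S0; rewrite ESW /Wc F2i ?F2j ?set0U ?set0D ?eqxx //;
        by apply: noPP_symd.
    have Mv : forall b,
      (if isMatch (symd (ext x b) (ext y (~~ b))) Mh then B (ext x b) (ext y (~~ b)) Mh else 0)
      = (if isMatch (symd (ext (symd x S) (~~ b)) (ext (symd y S) b)) Mh
         then B (ext (symd x S) (~~ b)) (ext (symd y S) b) Mh else 0).
      move=> b; rewrite E.
      have Es : symd (ext x (~~ b)) (ext y b) = symd (ext x b) (ext y (~~ b)).
        by rewrite !symd_ext // addbN addNb.
      rewrite Es; case: ifP => // Hc.
      have Hc' := Hc; rewrite symd_ext // addbN addbb /= in Hc'.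
      have iD : i \in symd x y :|: PP by rewrite inE inPP eqxx orbT.
      have jD : j \in symd x y :|: PP by rewrite inE inPP eqxx !orbT.
      have [Fi _] := pb_facts i Hc'; have [Fj _] := pb_facts j Hc'.
      have [SiM' iSi'] := Fi iD; have [SjM' jSj'] := Fj jD.
      set Si := pblock Mh i in SiM' iSi' *; set Sj := pblock Mh j in SjM' jSj' *.
      have /isMatchP[_ _ CC] := Hc'.
      have dij : forall z, z \in Si -> z \in Sj -> False.
        move=> z zi zj; have ESS := CC _ _ _ SiM' SjM' zi zj.
        have : [set i; j] \subset Si.
          by apply/subsetP => w; rewrite !inE => /orP[] /eqP->; [exact: iSi' | rewrite ESS; exact: jSj'].
        have /isMatchP[AA _ _] := Hc'; have [_ cS] := AA _ SiM'.
        move=> Hsub; have : [set i; j] == Si.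
          rewrite eqEcard Hsub cards2 ij /=.
          by case/orP: cS => /eqP->.
        move=> /eqP EPi; move: S0; rewrite ESW /Wc -/Si -/Sj -ESS setUid -EPi.
        rewrite /PP -lock setDv eqxx //.
      have KEY : forall a, symd (symd a Si) Sj = symd (symd a PP) (Wc Mh).
        move=> a; apply/setP => z; rewrite !in_symd /Wc !inE -/Si -/Sj.
        case zP: (z \in PP).
        - move: (zP); rewrite inPP => /orP[] /eqP Ez; subst z.
          + have : i \notin Sj by apply/negP => /(dij i iSi').
            by move=> /negbTE->; rewrite iSi'; case: (i \in a).
          + have : j \notin Si by apply/negP => /dij /(_ jSj').
            by move=> /negbTE->; rewrite jSj'; case: (j \in a).
        - case zi: (z \in Si); case zj: (z \in Sj); try (by exfalso; apply: (dij z));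
          by case: (z \in a).
      have SiU : Si \subset U.
        apply: subset_trans (match_sub Hc SiM') _.
        by apply: symd_sub; apply: ext_sub.
      have SjU : Sj \subset U.
        apply: subset_trans (match_sub Hc SjM') _.
        by apply: symd_sub; apply: ext_sub.
      rewrite (BI _ _ _ Si _ _ Hc SiM'); try apply: ext_sub => //.
      rewrite (BI (symd (ext x b) Si) (symd (ext y (~~ b)) Si) _ Sj) //; last first.
      * by rewrite symd_flip.
      * by apply: symd_sub => //; apply: ext_sub.
      * by apply: symd_sub => //; apply: ext_sub.
      rewrite !KEY -ESW !ext_flipW // negbK //.
    have M1 := Mv true; have M2 := Mv false.
    rewrite -[~~ true]/false in M1; rewrite -[~~ false]/true in M2.
    rewrite /T !big_bool !E !Z M1 M2.
    by rewrite !E /= !add0r !addr0 addrC.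
Qed.
End Contract.

End Gen.

Section Transport.
Variables (J : finType) (p : pred J).
Local Notation T := {x : J | p x}.

Definition liftS (a : {set T}) : {set J} := [set val t | t in a].
Definition liftM (m : {set {set T}}) : {set {set J}} := [set liftS s | s in m].
Definition restrS (x : {set J}) : {set T} := [set t | val t \in x].
Definition unliftM (M : {set {set J}}) : {set {set T}} := [set restrS S | S in M].
Definition Up : {set J} := [set z | p z].

Lemma mem_liftS a (t : T) : (val t \in liftS a) = (t \in a).
Proof. by rewrite mem_imset //; apply: val_inj. Qed.

Lemma notin_liftS a (z : J) : ~~ p z -> z \notin liftS a.
Proof. by move=> pz; apply/imsetP => [[t _ Ez]]; move: pz; rewrite Ez (valP t). Qed.

Lemma liftS_sub a : liftS a \subset Up.
Proof. by apply/subsetP => z /imsetP[t _ ->]; rewrite inE (valP t). Qed.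

Lemma restrSK a : restrS (liftS a) = a.
Proof. by apply/setP => t; rewrite inE mem_liftS. Qed.

Lemma liftSK (x : {set J}) : x \subset Up -> liftS (restrS x) = x.
Proof.
move=> /subsetP H; apply/setP => z; case: (boolP (p z)) => pz.
- by rewrite -[z](SubK T pz) mem_liftS inE.
- rewrite (negbTE (notin_liftS _ pz)); apply/esym/negP => /H; by rewrite inE (negbTE pz).
Qed.

Lemma liftS_symd a b : liftS (symd a b) = symd (liftS a) (liftS b).
Proof.
apply/setP => z; case: (boolP (p z)) => pz.
- by rewrite -[z](SubK T pz) !in_symd !mem_liftS in_symd.
- by rewrite in_symd !(negbTE (notin_liftS _ pz)).
Qed.

Lemma restrS_symd (x y : {set J}) : restrS (symd x y) = symd (restrS x) (restrS y).
Proof. by apply/setP => t; rewrite !inE; brute. Qed.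

Lemma isMatch_lift d m : isMatch (liftS d) (liftM m) = isMatch d m.
Proof.
rewrite /isMatch /liftM /liftS imset_partition; last by apply: val_inj.
congr andb; apply/forallP/forallP => H s; apply/implyP => Hs.
- move: (H [set val t | t in s]); rewrite mem_imset; last first.
    by move=> s1 s2 E; rewrite -[s1]restrSK -[s2]restrSK /liftS E.
  by rewrite Hs card_imset //; apply: val_inj.
- move: Hs => /imsetP[s' Hs' ->]; move: (H s'); rewrite Hs' card_imset //.
  by apply: val_inj.
Qed.

Lemma unliftK m : unliftM (liftM m) = m.
Proof.
rewrite /unliftM /liftM -imset_comp (eq_in_imset (g := id)) ?imset_id //.
by move=> s _ /=; rewrite restrSK.
Qed.

Lemma liftK d M : isMatch (liftS d) M -> liftM (unliftM M) = M.
Proof.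
move=> HM; rewrite /unliftM /liftM -imset_comp (eq_in_imset (g := id)) ?imset_id //.
move=> S HS /=; rewrite liftSK //; apply: subset_trans (match_sub HM HS) _.
exact: liftS_sub.
Qed.

Lemma sum_lift d (f : {set {set J}} -> rat) :
  \sum_(M | isMatch (liftS d) M) f M = \sum_(m | isMatch d m) f (liftM m).
Proof.
rewrite (reindex_onto liftM unliftM); last by move=> M HM; apply: liftK HM.
by apply: eq_bigl => m; rewrite isMatch_lift unliftK eqxx andbT.
Qed.

Lemma winds_of_windable (F : {set T} -> rat) :
  windable F -> winds Up (fun x => F (restrS x)).
Proof.
move=> [F0 [B [B0 [BS BI]]]]; split => //.
exists (fun x y M => B (restrS x) (restrS y) (unliftM M)); split => //; split.
- move=> x y Hx Hy.
  have -> : symd x y = liftS (symd (restrS x) (restrS y)) by rewrite liftS_symd !liftSK.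
  by rewrite sum_lift BS; apply: eq_bigr => m _; rewrite unliftK.
- move=> x y M S Hx Hy HM HS; rewrite !restrS_symd; apply: BI.
  + have E : symd x y = liftS (symd (restrS x) (restrS y)) by rewrite liftS_symd !liftSK.
    rewrite E in HM; by rewrite -isMatch_lift (liftK HM).
  + by apply: imset_f.
Qed.

Lemma windable_of_winds (G : {set J} -> rat) (F : {set T} -> rat) :
  winds Up G -> (forall a, F a = G (liftS a)) -> windable F.
Proof.
move=> [G0 [B [B0 [BS BI]]]] HF; split; first by move=> a; rewrite HF.
exists (fun a b m => B (liftS a) (liftS b) (liftM m)); split => //; split.
- move=> a b; rewrite !HF BS ?liftS_sub // -liftS_symd; exact: sum_lift.
- move=> a b m s Hm Hs; rewrite !liftS_symd; apply: BI; rewrite ?liftS_sub //.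
  + by rewrite -liftS_symd isMatch_lift.
  + by apply: imset_f.
Qed.

End Transport.

Definition FA (J : finType) (U x a : {set J}) := [forall z, (z \in U) ==> ((z \in x) == (z \in a))].

Section Core.
Variables (J : finType) (U : {set J}) (i j : J).
Hypotheses (iU : i \in U) (jU : j \in U).

Lemma FA1 (x a : {set J}) : a \subset U :\: [set i; j] ->
  ((i \in x) == (j \in x)) && FA (U :\: [set i; j]) x a && (i \in x) = FA U x (a :|: [set i; j]).
Proof.
move=> /subsetP Ha; apply/idP/idP.
- move=> /andP[/andP[/eqP Eij /forallP H] hi]; apply/forallP => z; apply/implyP => zU.
  case ze: (z \in [set i; j]).
  + rewrite inE ze orbT; move: ze; rewrite !inE => /orP[] /eqP->; by rewrite -?Eij hi.
  + have zU' : z \in U :\: [set i; j] by rewrite inE ze zU.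
    by move: (H z); rewrite zU' /= inE ze orbF.
- move=> /forallP H.
  have hi : i \in x by move: (H i); rewrite iU /= !inE eqxx /= orbT => /eqP.
  have hj : j \in x by move: (H j); rewrite jU /= !inE eqxx /= !orbT => /eqP.
  rewrite hi hj /= andbT; apply/forallP => z; apply/implyP; rewrite inE => /andP[zne zU].
  by move: (H z); rewrite zU /= inE (negbTE zne) orbF.
Qed.

Lemma FA0 (x a : {set J}) : a \subset U :\: [set i; j] ->
  ((i \in x) == (j \in x)) && FA (U :\: [set i; j]) x a && ~~ (i \in x) = FA U x a.
Proof.
move=> /subsetP Ha.
have na : forall z, z \in [set i; j] -> z \notin a.
  by move=> z ze; apply/negP => /Ha; rewrite inE ze.
apply/idP/idP.
- move=> /andP[/andP[/eqP Eij /forallP H] hi]; apply/forallP => z; apply/implyP => zU.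
  case ze: (z \in [set i; j]).
  + rewrite (negbTE (na z ze)); move: ze; rewrite !inE => /orP[] /eqP->; by rewrite -?Eij (negbTE hi).
  + have zU' : z \in U :\: [set i; j] by rewrite inE ze zU.
    by move: (H z); rewrite zU'.
- move=> /forallP H.
  have iP : i \in [set i; j] by rewrite !inE eqxx.
  have jP : j \in [set i; j] by rewrite !inE eqxx orbT.
  have hi : i \notin x by move: (H i); rewrite iU /= (negbTE (na i iP)) => /eqP->.
  have hj : j \notin x by move: (H j); rewrite jU /= (negbTE (na j jP)) => /eqP->.
  rewrite (negbTE hi) (negbTE hj) /= andbT; apply/forallP => z; apply/implyP; rewrite inE => /andP[zne zU].
  by move: (H z); rewrite zU.
Qed.

End Core.

Unset Implicit Arguments.
Section Circuit.
Variables (J V : finType) (owner : J -> V) (A : {set J}) (E : {set {set J}}).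
Hypotheses (HE : partition E (~: A)) (HE2 : forall e, e \in E -> #|e| = 2%N).
Variable F : forall v : V, {set inc_t owner v} -> rat.
Hypothesis HF : forall v : V, windable (F v).

Definition Uv (v : V) : {set J} := [set z | owner z == v].
Definition Us (s : seq V) : {set J} := [set z | owner z \in s].

Lemma restr_I (x U : {set J}) v : Uv v \subset U -> restr owner (x :&: U) v = restr owner x v.
Proof.
move=> /subsetP H; apply/setP => t; rewrite !inE.
have : val t \in U by apply: H; rewrite inE (valP t).
by move=> ->; rewrite andbT.
Qed.

Lemma winds_vertex v : winds (Uv v) (fun x => F v (restr owner x v)).
Proof. exact: (@winds_of_windable J (fun j => owner j == v) (F v) (HF v)). Qed.

Lemma winds_seq (s : seq V) : uniq s ->
  winds (Us s) (fun x => \prod_(v <- s) F v (restr owner x v)).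
Proof.
elim: s => [_|v s IH /= /andP[vs us]].
- have -> : Us [::] = set0 by apply/setP => z; rewrite !inE.
  apply: winds_ext (@winds0 J) _ _.
  + by move=> x; rewrite big_nil.
  + by move=> x _; rewrite big_nil.
- have dis : [disjoint Uv v & Us s].
    rewrite -setI_eq0; apply/eqP/setP => z; rewrite !inE.
    by apply/negP => /andP[/eqP Ez zs]; move: vs; rewrite -Ez zs.
  have H := winds_mul dis (winds_vertex v) (IH us).
  have -> : Us (v :: s) = Uv v :|: Us s by apply/setP => z; rewrite !inE.
  apply: winds_ext H _ _.
  + move=> x; apply: prodr_ge0 => w _; by have [] := HF w.
  + move=> x _ /=; rewrite big_cons restr_I //.
    congr (_ * _); rewrite big_seq_cond [RHS]big_seq_cond; apply: eq_bigr => w /andP[ws _].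
    rewrite restr_I //; apply/subsetP => z; rewrite !inE => /eqP->; exact: ws.
Qed.

Lemma winds_wt : winds setT (wt F).
Proof.
have H := winds_seq (enum V) (enum_uniq V).
have EU : Us (enum V) = setT by apply/setP => z; rewrite !inE mem_enum.
rewrite EU in H.
apply: winds_ext H _ _.
- move=> x; apply: prodr_ge0 => w _; by have [] := HF w.
- by move=> x _; rewrite big_enum.
Qed.

Definition Sig (E' : {set {set J}}) (a : {set J}) : rat :=
  \sum_(x | is_assignment E' x && FA (~: cover E') x a) wt F x.

Lemma Sig_ge0 (E' : {set {set J}}) (a : {set J}) : 0 <= Sig E' a.
Proof. apply: sumr_ge0 => x _; apply: prodr_ge0 => w _; by have [] := HF w. Qed.

Lemma assignU1 (e : {set J}) (E'' : {set {set J}}) (x : {set J}) : is_assignment (e |: E'') x =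
  [forall i in e, forall j in e, (i \in x) == (j \in x)] && is_assignment E'' x.
Proof.
rewrite /is_assignment; apply/forallP/andP => [H|[H1 /forallP H2] e'].
- split; first by move: (H e); rewrite setU11; exact: id.
  apply/forallP => e'; apply/implyP => He'; move: (H e'); rewrite inE He' orbT; exact: id.
- apply/implyP; rewrite !inE => /orP[/eqP->|He'] //.
  by move: (H2 e'); rewrite He'.
Qed.

Lemma cons_pair (i j : J) (x : {set J}) : [forall a in [set i; j], forall b in [set i; j], (a \in x) == (b \in x)]
  = ((i \in x) == (j \in x)).
Proof.
apply/idP/idP.
- move=> /forallP/(_ i); rewrite !inE eqxx /= => /forallP/(_ j); by rewrite !inE eqxx orbT.
- move=> /eqP H; apply/forallP => a; apply/implyP; rewrite !inE => /orP[] /eqP->;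
  apply/forallP => b; apply/implyP; rewrite !inE => /orP[] /eqP->; by rewrite ?H.
Qed.

Lemma cover0 : cover (set0 : {set {set J}}) = set0.
Proof. by rewrite /cover big_set0. Qed.

Lemma Sig0 (a : {set J}) : Sig set0 a = wt F a.
Proof.
rewrite /Sig cover0 setC0 (eq_bigl (fun x => x == a)) ?big_pred1_eq // => x.
have -> : is_assignment (set0 : {set {set J}}) x by apply/forallP => e; rewrite inE.
apply/forallP/eqP => [H|->]; last by move=> z; rewrite eqxx implybT.
by apply/setP => z; move: (H z); rewrite inE /= => /eqP.
Qed.

Lemma trivE : trivIset E.
Proof. exact: partition_trivIset HE. Qed.

Lemma winds_Sig n : forall (E' : {set {set J}}), E' \subset E -> #|E'| = n -> winds (~: cover E') (Sig E').
Proof.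
elim: n => [|n IH] E' sub cE'.
- rewrite (cards0_eq cE') cover0 setC0.
  apply: winds_ext winds_wt _ _; first by move=> a; apply: Sig_ge0.
  by move=> a _; rewrite Sig0.
- case: (set_0Vmem E') => [E0|[e eE']]; first by rewrite E0 cards0 in cE'.
  set E'' := E' :\ e.
  have cE'' : #|E''| = n by move: (cardsD1 e E'); rewrite eE' cE' -/E'' /=; lia.
  have sub'' : E'' \subset E by apply: subset_trans sub; apply: subsetDl.
  have eE : e \in E by apply: (subsetP sub).
  have IH' := IH E'' sub'' cE''.
  have /cards2P [i [j [ij De]]] : #|e| == 2%N by rewrite HE2.
  have neE : e \notin E'' by rewrite setD11.
  have DE' : E' = e |: E'' by rewrite setD1K.
  have cov : cover E' = e :|: cover E'' by rewrite DE' /cover big_setU1.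
  have nic : forall w, w \in e -> w \notin cover E''.
    move=> w we; apply/bigcupP => [[B BE wB]].
    have BE' : B \in E by apply: (subsetP sub'').
    have neB : e != B by apply/eqP => EB; move: neE; rewrite EB BE.
    have := (trivIsetP trivE) e B eE BE' neB.
    by move=> /disjointFr/(_ we); rewrite wB.
  have iU : i \in ~: cover E'' by rewrite inE nic // De !inE eqxx.
  have jU : j \in ~: cover E'' by rewrite inE nic // De !inE eqxx orbT.
  have H := winds_contract iU jU ij IH'.
  have EPP : PP i j = e by rewrite /PP -lock De.
  rewrite EPP in H.
  have EU : ~: cover E' = ~: cover E'' :\: e.
    by apply/setP => z; rewrite cov !inE negb_or andbC.
  rewrite EU; apply: winds_ext H _ _; first by move=> a; apply: Sig_ge0.
  move=> a Ha; rewrite /Sig [X in _ = X](bigID (fun x : {set J} => i \in x)) /= addrC.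
  congr (_ + _); apply: eq_bigl => x; rewrite EU DE' assignU1 De cons_pair;
    case: (is_assignment E'' x); rewrite ?andbF ?andbT //=.
  + rewrite (FA0 iU jU) //; by rewrite -De.
  + rewrite (FA1 iU jU) //; by rewrite -De.
Qed.

End Circuit.

Local Close Scope ring_scope.

Theorem lemma9 (J V : finType) (owner : J -> V) (A : {set J}) (E : {set {set J}})
  (HE : partition E (~: A)) (HE2 : forall e, e \in E -> #|e| = 2)
  (F : forall v : V, {set inc_t owner v} -> rat)
  (HF : forall v : V, windable (F v)) :
  windable (@signature J V owner A E F).
Proof.
have HW := winds_Sig J V owner A E HE HE2 F HF #|E| E (subxx E) erefl.
have CE : ~: cover E = A by rewrite (cover_partition HE) setCK.
rewrite CE in HW.
apply: (@windable_of_winds J (fun j => j \in A) (Sig J V owner F E)).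
- have -> : Up (fun j => j \in A) = A by apply/setP => z; rewrite inE.
  exact: HW.
- move=> a; rewrite /signature /Sig CE; apply: eq_bigl => x; congr andb.
  apply/forallP/forallP => H.
  + move=> z; apply/implyP => zA.
    by move: (H (Sub z zA)); rewrite -(mem_liftS a) SubK.
  + move=> t; move: (H (val t)); rewrite (valP t) /= mem_liftS; exact: id.
Qed.
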